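(* In the configuration described in the context, suppose $R_1>R_2$ are positive integers. Then the three lengths $T_1T_2$, $C_1M$, $C_2M$ are all integers if and only if there exist positive integers $\delta, r_1, r_2, r_3$ with $\gcd(r_1,r_2)=1$ and $r_1^2+r_2^2=r_3^2$ such that $R_1=\delta r_1^2$ and $R_2=\delta r_2^2$ (necessarily $r_1>r_2$). In that case $T_1T_2 = 2\delta r_1r_2$, $IM=T_1M=T_2M=\delta r_1 r_2$, $C_1M=\delta r_1r_3$, $C_2M=\delta r_2 r_3$, and the lengths $T_1I = \frac{2\delta r_2r_1^2}{r_3}$, $T_2I=\frac{2\delta r_1r_2^2}{r_3}$, $C_1M_1=\frac{\delta r_1^3}{r_3}$, $C_2M_2=\frac{\delta r_2^3}{r_3}$, $M_1M = \frac{\delta r_1r_2^2}{r_3}$, $M_2M=\frac{\delta r_2r_1^2}{r_3}$, $C_2K=\frac{\delta r_2^2r_3^2}{r_1^2-r_2^2}$, $T_2K=\frac{2\delta r_2^3r_1}{r_1^2-r_2^2}$, $C_1K=\frac{\delta r_1^2r_3^2}{r_1^2-r_2^2}$, $T_1K=\frac{2\delta r_1^3r_2}{r_1^2-r_2^2}$ are rational.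
   Context: Configuration: two circles in the plane with centers $C_1,C_2$ and radii $R_1>R_2>0$, externally tangent at the point $I$ (so $I$ lies on segment $C_1C_2$ and $C_1C_2=R_1+R_2$). Let a common external tangent line touch the first circle at $T_1$ and the second circle at $T_2$ (both circles on the same side of line $T_1T_2$). Let $M$ be the midpoint of segment $T_1T_2$; equivalently, $M$ is the point where the common tangent line at $I$ (the line through $I$ perpendicular to $C_1C_2$) meets $T_1T_2$. Let $M_1$ be the midpoint of segment $T_1I$ (which is the intersection point of segment $C_1M$ with $T_1I$, the foot of the perpendicular from $C_1$ to $T_1I$), and $M_2$ the midpoint of segment $T_2I$ (the intersection of $C_2M$ with $T_2I$). Since $R_1>R_2$, the lines $T_1T_2$ and $C_1C_2$ meet at a point $K$, lying beyond $C_2$ on ray $C_1C_2$ and beyond $T_2$ on ray $T_1T_2$. For points $X,Y$, $XY$ denotes the length of segment $\overline{XY}$. *)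

(* Defs.v *)
From Stdlib Require Import Reals Lra Lia ZArith Arith.
Open Scope R_scope.

Definition point : Type := (R * R)%type.

Definition pdist (X Y : point) : R :=
  sqrt ((fst X - fst Y) ^ 2 + (snd X - snd Y) ^ 2).

Definition dotv (A B C D : point) : R :=
  (fst B - fst A) * (fst D - fst C) + (snd B - snd A) * (snd D - snd C).

(* Cross product of vectors (B - A) and (C - A): zero iff A, B, C collinear. *)
Definition cross (A B C : point) : R :=
  (fst B - fst A) * (snd C - snd A) - (snd B - snd A) * (fst C - fst A).

Definition midpoint (A B : point) : point :=
  ((fst A + fst B) / 2, (snd A + snd B) / 2).

Definition is_integer (x : R) : Prop := exists n : Z, x = IZR n.

Definition is_rational (x : R) : Prop :=
  exists p q : Z, q <> 0%Z /\ x = IZR p / IZR q.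

Definition config (Rad1 Rad2 : R) (C1 C2 I T1 T2 M M1 M2 K : point) : Prop :=
  0 < Rad2 /\ Rad2 < Rad1 /\
  (* externally tangent circles, tangent at I *)
  pdist C1 C2 = Rad1 + Rad2 /\ pdist C1 I = Rad1 /\ pdist C2 I = Rad2 /\
  pdist C1 T1 = Rad1 /\ pdist C2 T2 = Rad2 /\
  (* line T1T2 is tangent to both circles at T1 and T2 *)
  T1 <> T2 /\ dotv T1 T2 T1 C1 = 0 /\ dotv T1 T2 T2 C2 = 0 /\
  (* both circles on the same side of T1T2 (external tangent) *)
  dotv T1 C1 T2 C2 > 0 /\
  M = midpoint T1 T2 /\ M1 = midpoint T1 I /\ M2 = midpoint T2 I /\
  (* K is the intersection of lines T1T2 and C1C2 *)
  cross T1 T2 K = 0 /\ cross C1 C2 K = 0.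

(* Main.v *)
Require Import Defs.
From Stdlib Require Import Reals Lra Lia Psatz ZArith Arith.
Open Scope R_scope.
Section NTsec.
Local Open Scope nat_scope.
Lemma coprime_sq a b : Nat.gcd a b = 1 -> Nat.gcd a (b*b) = 1.
Proof.
  intros H.
  set (g := Nat.gcd a (b*b)).
  assert (Ha : Nat.divide g a) by apply Nat.gcd_divide_l.
  assert (Hb : Nat.divide g (b*b)) by apply Nat.gcd_divide_r.
  assert (Hgb : Nat.gcd g b = 1).
  { apply Nat.divide_1_r. rewrite <- H. apply Nat.gcd_greatest.
    - eapply Nat.divide_trans; [apply Nat.gcd_divide_l|exact Ha].
    - apply Nat.gcd_divide_r. }
  assert (Hgb' : Nat.divide g b) by (eapply Nat.gauss; eauto).
  apply Nat.divide_1_r. rewrite <- H. apply Nat.gcd_greatest; auto.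
Qed.

Lemma sq_factor x P t : (0 < x) -> P*P = x*x*t -> exists p, t = p*p.
Proof.
  intros Hx HP.
  set (h := Nat.gcd P x).
  assert (Hh : h <> 0) by (unfold h; intro E; apply Nat.gcd_eq_0 in E; lia).
  destruct (Nat.gcd_divide_l P x) as [p Hp].
  destruct (Nat.gcd_divide_r P x) as [q Hq].
  fold h in Hp, Hq.
  assert (Hpq : Nat.gcd p q = 1).
  { assert (E1 : p = P / h) by (rewrite Hp; rewrite Nat.div_mul; auto).
    assert (E2 : q = x / h) by (rewrite Hq; rewrite Nat.div_mul; auto).
    rewrite E1, E2. apply Nat.gcd_div_gcd; auto. }
  assert (E : p*p = q*q*t).
  { rewrite Hp, Hq in HP.
    apply (Nat.mul_cancel_l _ _ (h*h)); [nia|]. nia. }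
  assert (Hq1 : q = 1).
  { assert (Hc : Nat.gcd q (p*p) = 1).
    { apply coprime_sq. rewrite Nat.gcd_comm. exact Hpq. }
    apply Nat.divide_1_r. rewrite <- Hc. apply Nat.gcd_greatest.
    apply Nat.divide_refl. exists (q*t). lia. }
  subst q. exists p. lia.
Qed.

Lemma nt_main R1 R2 N P : (0 < R2) -> (R2 < R1) -> 4*R1*R2 = N*N -> R1*(R1+R2) = P*P ->
  exists d r1 r2 r3 : nat,
      (0 < d)%nat /\ (0 < r1)%nat /\ (0 < r2)%nat /\ (0 < r3)%nat /\
      Nat.gcd r1 r2 = 1%nat /\ (r1 ^ 2 + r2 ^ 2 = r3 ^ 2)%nat /\
      R1 = (d * r1 ^ 2)%nat /\ R2 = (d * r2 ^ 2)%nat.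
Proof.
  intros H2 H12 HN HP.
  assert (Ev : Nat.even (N*N) = true).
  { rewrite <- HN. rewrite <- Nat.mul_assoc. rewrite Nat.even_mul. reflexivity. }
  rewrite Nat.even_mul, Bool.orb_diag in Ev.
  apply Nat.even_spec in Ev. destruct Ev as [m Hm]. subst N.
  assert (Hm : R1*R2 = m*m) by nia.
  set (g := Nat.gcd R1 m).
  assert (Hg : g <> 0) by (unfold g; intro E; apply Nat.gcd_eq_0 in E; lia).
  destruct (Nat.gcd_divide_l R1 m) as [a Ha].
  destruct (Nat.gcd_divide_r R1 m) as [b Hb].
  fold g in Ha, Hb.
  assert (Hab : Nat.gcd a b = 1).
  { assert (E1 : a = R1 / g) by (rewrite Ha; rewrite Nat.div_mul; auto).
    assert (E2 : b = m / g) by (rewrite Hb; rewrite Nat.div_mul; auto).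
    rewrite E1, E2. apply Nat.gcd_div_gcd; auto. }
  assert (E : a*R2 = g*(b*b)).
  { apply (Nat.mul_cancel_l _ _ g); auto. rewrite Ha, Hb in Hm. nia. }
  assert (Hdiv : Nat.divide a ((b*b)*g)).
  { exists R2. lia. }
  apply Nat.gauss in Hdiv; [|apply coprime_sq; auto].
  destruct Hdiv as [dl Hdl].
  assert (Ha0 : a <> 0) by (intro Z; rewrite Z in Ha; lia).
  assert (HR2 : R2 = dl*(b*b)).
  { apply (Nat.mul_cancel_l _ _ a); auto. rewrite E, Hdl. lia. }
  assert (HR1 : R1 = dl*(a*a)) by (rewrite Ha, Hdl; lia).
  assert (Hd : 0 < dl) by (destruct dl; lia).
  assert (Hb0 : 0 < b) by (destruct b; lia).
  destruct (sq_factor (dl*a) P (a*a+b*b)) as [r3 Hr3].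
  { nia. }
  { rewrite <- HP, HR1, HR2. nia. }
  exists dl, a, b, r3.
  rewrite !Nat.pow_2_r.
  repeat split; try lia.

Qed.
End NTsec.

Lemma pdist_sq X Y v : pdist X Y = v ->
  (fst X - fst Y)^2 + (snd X - snd Y)^2 = v^2.
Proof.
  unfold pdist; intro H; rewrite <- H; rewrite pow2_sqrt; [reflexivity|apply Rplus_le_le_0_compat; apply pow2_ge_0].
Qed.

Lemma dist_comb (X Y : point) r q ux uy px py al be F :
  ux^2+uy^2 = (r+q)^2 -> px^2+py^2 = q^2 -> ux*px+uy*py = q*(r-q) ->
  fst X - fst Y = al*ux+be*px -> snd X - snd Y = al*uy+be*py ->
  al^2*(r+q)^2 + 2*al*be*(q*(r-q)) + be^2*q^2 = F -> pdist X Y = sqrt F.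
Proof.
  intros Gu Gp Gup Hx Hy HF. unfold pdist. f_equal.
  rewrite Hx, Hy, <- HF, <- Gup, <- Gu, <- Gp. ring.
Qed.

Lemma sq0 a b : a^2+b^2 = 0 -> a = 0 /\ b = 0.
Proof. intros; split; nra. Qed.

Lemma solve_lin s w r u : s <> 0 -> s*w - r*u = 0 -> w = r/s*u.
Proof.
  intros Hs H. replace w with ((s*w)/s) by (field; auto).
  replace (s*w) with (r*u) by lra. field; auto.
Qed.

Lemma geom r q C1 C2 I T1 T2 M M1 M2 K : config r q C1 C2 I T1 T2 M M1 M2 K ->
 pdist T1 T2 = sqrt(4*r*q) /\ pdist I M = sqrt(r*q) /\ pdist T1 M = sqrt(r*q) /\
 pdist T2 M = sqrt(r*q) /\ pdist C1 M = sqrt(r*(r+q)) /\ pdist C2 M = sqrt(q*(r+q)) /\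
 pdist T1 I = sqrt(4*r^2*q/(r+q)) /\ pdist T2 I = sqrt(4*r*q^2/(r+q)) /\
 pdist C1 M1 = sqrt(r^3/(r+q)) /\ pdist C2 M2 = sqrt(q^3/(r+q)) /\
 pdist M1 M = sqrt(r*q^2/(r+q)) /\ pdist M2 M = sqrt(r^2*q/(r+q)) /\
 pdist C2 K = sqrt((q*(r+q)/(r-q))^2) /\ pdist T2 K = sqrt(4*r*q^3/(r-q)^2) /\
 pdist C1 K = sqrt((r*(r+q)/(r-q))^2) /\ pdist T1 K = sqrt(4*r^3*q/(r-q)^2).
Proof.
  intro H.
  destruct H as (Hq & Hqr & H12 & H1I & H2I & H1T & H2T & Hne & Hd1 & Hd2 & Hside & HM & HM1 & HM2 & HK1 & HK2).
  apply pdist_sq in H12, H1I, H2I, H1T, H2T.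
  subst M M1 M2.
  destruct C1 as [x1 y1], C2 as [x2 y2], I as [xi yi], T1 as [a1 b1], T2 as [a2 b2], K as [xk yk].
  unfold dotv, cross in *; simpl in *.
  pose (ux := x2 - x1); assert (E : x2 = x1 + ux) by (unfold ux; ring); clearbody ux; subst x2.
  pose (uy := y2 - y1); assert (E : y2 = y1 + uy) by (unfold uy; ring); clearbody uy; subst y2.
  pose (wx := xi - x1); assert (E : xi = x1 + wx) by (unfold wx; ring); clearbody wx; subst xi.
  pose (wy := yi - y1); assert (E : yi = y1 + wy) by (unfold wy; ring); clearbody wy; subst yi.
  pose (ex := a1 - x1); assert (E : a1 = x1 + ex) by (unfold ex; ring); clearbody ex; subst a1.
  pose (ey := b1 - y1); assert (E : b1 = y1 + ey) by (unfold ey; ring); clearbody ey; subst b1.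
  pose (px := a2 - x1 - ux); assert (E : a2 = x1 + ux + px) by (unfold px; ring); clearbody px; subst a2.
  pose (py := b2 - y1 - uy); assert (E : b2 = y1 + uy + py) by (unfold py; ring); clearbody py; subst b2.
  pose (kx := xk - x1); assert (E : xk = x1 + kx) by (unfold kx; ring); clearbody kx; subst xk.
  pose (ky := yk - y1); assert (E : yk = y1 + ky) by (unfold ky; ring); clearbody ky; subst yk.
  assert (Gu : ux^2+uy^2 = (r+q)^2) by lra.
  assert (Gw : wx^2+wy^2 = r^2) by lra.
  assert (Gp : px^2+py^2 = q^2) by lra.
  assert (Ge : ex^2+ey^2 = r^2) by lra.
  clear H12 H1I H1T H2T.
  assert (Hwu : wx*ux+wy*uy = r*(r+q)) by lra.
  assert (HA : ((r+q)*wx - r*ux)^2 + ((r+q)*wy - r*uy)^2 = 0).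
  { replace (((r+q)*wx - r*ux)^2 + ((r+q)*wy - r*uy)^2) with
      ((r+q)^2*(wx^2+wy^2) - 2*r*(r+q)*(wx*ux+wy*uy) + r^2*(ux^2+uy^2)) by ring.
    rewrite Gw, Hwu, Gu. ring. }
  apply sq0 in HA; destruct HA as [HAx HAy].
  apply solve_lin in HAx; [|lra]. apply solve_lin in HAy; [|lra].
  subst wx wy. clear Hwu Gw H2I.
  set (vx := ux + px - ex) in *. set (vy := uy + py - ey) in *.
  assert (H7 : vx*ex + vy*ey = 0) by (unfold vx, vy; lra).
  assert (H8 : vx*px + vy*py = 0) by (unfold vx, vy; lra).
  assert (H9 : ex*px + ey*py > 0) by lra.
  assert (Hv : vx <> 0 \/ vy <> 0).
  { destruct (Req_dec vx 0) as [Ex|Ex]; [|left; auto].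
    destruct (Req_dec vy 0) as [Ey|Ey]; [|right; auto].
    exfalso; apply Hne. unfold vx, vy in *. f_equal; lra. }
  assert (Hcr : ex*py - ey*px = 0).
  { assert (E1 : vx*(ex*py - ey*px) = py*(vx*ex+vy*ey) - ey*(vx*px+vy*py)) by ring.
    assert (E2 : vy*(ex*py - ey*px) = -(px*(vx*ex+vy*ey) - ex*(vx*px+vy*py))) by ring.
    rewrite H7, H8 in E1, E2.
    destruct Hv as [Hv|Hv].
    - apply (Rmult_eq_reg_l vx); auto. lra.
    - apply (Rmult_eq_reg_l vy); auto. lra. }
  assert (Hep2 : (ex*px+ey*py)^2 = (r*q)^2).
  { replace ((ex*px+ey*py)^2) with ((ex^2+ey^2)*(px^2+py^2) - (ex*py - ey*px)^2) by ring.
    rewrite Ge, Gp, Hcr. ring. }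
  assert (Hep : ex*px+ey*py = r*q).
  { assert (Z : (ex*px+ey*py - r*q)*(ex*px+ey*py + r*q) = 0)
      by (replace ((ex*px+ey*py - r*q)*(ex*px+ey*py + r*q)) with ((ex*px+ey*py)^2 - (r*q)^2) by ring; lra).
    apply Rmult_integral in Z. destruct Z as [Z|Z]; [lra|].
    assert (0 < r*q) by (apply Rmult_lt_0_compat; lra). lra. }
  assert (HB : (q*ex - r*px)^2 + (q*ey - r*py)^2 = 0).
  { replace ((q*ex - r*px)^2 + (q*ey - r*py)^2) with
      (q^2*(ex^2+ey^2) - 2*q*r*(ex*px+ey*py) + r^2*(px^2+py^2)) by ring.
    rewrite Ge, Hep, Gp. ring. }
  apply sq0 in HB; destruct HB as [HBx HBy].
  apply solve_lin in HBx; [|lra]. apply solve_lin in HBy; [|lra].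
  unfold vx, vy in *. clear vx vy.
  subst ex ey. clear Hep Hep2 Hcr Hv H7 H9 Ge Hd1 Hside.
  assert (Gup : ux*px+uy*py = q*(r-q)).
  { assert (E : ux*px+uy*py = -(px^2+py^2) + r/q*(px^2+py^2)) by lra.
    rewrite E, Gp. field. lra. }
  clear H8 Hd2.
  set (cu := ux*py - uy*px).
  assert (Hcu : cu <> 0).
  { assert (E : cu^2 = (ux^2+uy^2)*(px^2+py^2) - (ux*px+uy*py)^2) by (unfold cu; ring).
    rewrite Gu, Gp, Gup in E. intro Z. rewrite Z in E.
    replace ((r+q)^2*q^2 - (q*(r-q))^2) with (4*r*(q*q*q)) in E by ring.
    assert (0 < 4*r*(q*q*q)) by (repeat apply Rmult_lt_0_compat; lra). lra. }
  set (k := r/q) in *.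
  set (mu := r/(r-q)).
  assert (E1 : ux*ky - uy*kx = 0) by lra.
  assert (E2 : (ux + px - k*px)*(ky - k*py) - (uy + py - k*py)*(kx - k*px) = 0) by lra.
  assert (Hdet : (1-k)*cu <> 0).
  { apply Rmult_integral_contrapositive; split; auto. unfold k.
    intro Z. assert (r = q); [|lra]. apply (Rmult_eq_reg_l (/q)); [|apply Rinv_neq_0_compat; lra].
    field_simplify; lra. }
  assert (HDx : (1-k)*cu*(kx - mu*ux) = (ux + px - k*px)*(ux*ky - uy*kx)
     - ux*((ux + px - k*px)*(ky - k*py) - (uy + py - k*py)*(kx - k*px))).
  { unfold cu, mu, k. field. split; lra. }
  assert (HDy : (1-k)*cu*(ky - mu*uy) = (uy + py - k*py)*(ux*ky - uy*kx)
     - uy*((ux + px - k*px)*(ky - k*py) - (uy + py - k*py)*(kx - k*px))).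
  { unfold cu, mu, k. field. split; lra. }
  rewrite E1, E2, Rmult_0_r, Rmult_0_r, Rminus_0_r in HDx, HDy.
  assert (HKx : kx = mu*ux).
  { apply Rmult_integral in HDx. destruct HDx; [contradiction|lra]. }
  assert (HKy : ky = mu*uy).
  { apply Rmult_integral in HDy. destruct HDy; [contradiction|lra]. }
  subst kx ky. unfold mu, k in *. clear E1 E2 HDx HDy Hdet Hcu HK1 HK2 mu k cu Hne.
  Ltac dc al be := eapply (dist_comb _ _ _ _ _ _ _ _ al be); eauto;
     [simpl; field; repeat split; lra | simpl; field; repeat split; lra |
      field; repeat split; lra].
  repeat split.
  - dc (-1) (r/q - 1).
  - dc (r/(r+q) - 1/2) (-(r/q+1)/2).
  - dc (-1/2) (r/q - (r/q+1)/2).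
  - dc (1/2) (1 - (r/q+1)/2).
  - dc (-1/2) (-(r/q+1)/2).
  - dc (1/2) (-(r/q+1)/2).
  - dc (-(r/(r+q))) (r/q).
  - dc (1 - r/(r+q)) 1.
  - dc (-(r/(r+q))/2) (-(r/q)/2).
  - dc (1 - (1 + r/(r+q))/2) (-1/2).
  - dc (r/(r+q)/2 - 1/2) (r/q/2 - (r/q+1)/2).
  - dc ((1+r/(r+q))/2 - 1/2) (1/2 - (r/q+1)/2).
  - dc (1 - r/(r-q)) 0.
  - dc (1 - r/(r-q)) 1.
  - dc (-(r/(r-q))) 0.
  - dc (-(r/(r-q))) (r/q).
Qed.

Lemma sqrt_eq x y : 0 <= y -> x = y^2 -> sqrt x = y.
Proof. intros Hy Hx. rewrite Hx. apply sqrt_pow2; auto. Qed.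

Lemma int_sq x (n : Z) : 0 <= x -> sqrt x = IZR n -> exists N : nat, x = INR N * INR N.
Proof.
  intros Hx H.
  assert (Hn : (0 <= n)%Z) by (apply le_IZR; rewrite <- H; apply sqrt_pos).
  exists (Z.to_nat n). rewrite INR_IZR_INZ, Z2Nat.id by auto.
  rewrite <- H. rewrite sqrt_sqrt; auto.
Qed.

Lemma INR4 : INR 4 = 4. Proof. simpl. ring. Qed.
Lemma INR2 : INR 2 = 2. Proof. simpl. ring. Qed.

Ltac pos := apply Rlt_le; repeat (apply Rdiv_lt_0_compat || apply Rmult_lt_0_compat || apply Rinv_0_lt_compat || apply pow_lt); lra.

Lemma part2 (R1 R2 : nat) (C1 C2 I T1 T2 M M1 M2 K : point) :
  (0 < R2)%nat -> (R2 < R1)%nat ->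
  config (INR R1) (INR R2) C1 C2 I T1 T2 M M1 M2 K ->
  (forall d r1 r2 r3 : nat,
      (0 < d)%nat -> (0 < r1)%nat -> (0 < r2)%nat -> (0 < r3)%nat ->
      Nat.gcd r1 r2 = 1%nat -> (r1 ^ 2 + r2 ^ 2 = r3 ^ 2)%nat ->
      R1 = (d * r1 ^ 2)%nat -> R2 = (d * r2 ^ 2)%nat ->
      let dd := INR d in let a := INR r1 in let b := INR r2 in let c := INR r3 in
      (r2 < r1)%nat /\
      pdist T1 T2 = 2 * dd * a * b /\
      pdist I M = dd * a * b /\ pdist T1 M = dd * a * b /\ pdist T2 M = dd * a * b /\
      pdist C1 M = dd * a * c /\ pdist C2 M = dd * b * c /\
      pdist T1 I = 2 * dd * b * a ^ 2 / c /\
      pdist T2 I = 2 * dd * a * b ^ 2 / c /\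
      pdist C1 M1 = dd * a ^ 3 / c /\
      pdist C2 M2 = dd * b ^ 3 / c /\
      pdist M1 M = dd * a * b ^ 2 / c /\
      pdist M2 M = dd * b * a ^ 2 / c /\
      pdist C2 K = dd * b ^ 2 * c ^ 2 / (a ^ 2 - b ^ 2) /\
      pdist T2 K = 2 * dd * b ^ 3 * a / (a ^ 2 - b ^ 2) /\
      pdist C1 K = dd * a ^ 2 * c ^ 2 / (a ^ 2 - b ^ 2) /\
      pdist T1 K = 2 * dd * a ^ 3 * b / (a ^ 2 - b ^ 2) /\
      is_rational (pdist T1 I) /\ is_rational (pdist T2 I) /\
      is_rational (pdist C1 M1) /\ is_rational (pdist C2 M2) /\
      is_rational (pdist M1 M) /\ is_rational (pdist M2 M) /\
      is_rational (pdist C2 K) /\ is_rational (pdist T2 K) /\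
      is_rational (pdist C1 K) /\ is_rational (pdist T1 K)).
Proof.
  intros H2 H12 Hc d r1 r2 r3 Hd Hr1 Hr2 Hr3 Hg Hpy E1 E2 dd a b c.
  assert (Hlt : (r2 < r1)%nat).
  { destruct (le_lt_dec r1 r2) as [Hle|Hle]; auto.
    assert (r1^2 <= r2^2)%nat by (apply Nat.pow_le_mono_l; auto). nia. }
  assert (Hsq : (r2^2 < r1^2)%nat) by (apply Nat.pow_lt_mono_l; lia).
  apply geom in Hc.
  rewrite E1, E2, !mult_INR, !pow_INR in Hc. fold dd a b c in Hc.
  assert (Hc2 : a^2 + b^2 = c^2).
  { unfold a, b, c. rewrite <- !pow_INR, <- plus_INR. f_equal. auto. }
  assert (Es : dd*a^2 + dd*b^2 = dd*c^2) by (rewrite <- Hc2; ring).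
  rewrite Es in Hc.
  assert (Hdp : 0 < dd) by (apply lt_0_INR; auto).
  assert (Hap : 0 < a) by (apply lt_0_INR; auto).
  assert (Hbp : 0 < b) by (apply lt_0_INR; auto).
  assert (Hcp : 0 < c) by (apply lt_0_INR; auto).
  assert (Hab : b < a) by (apply lt_INR; auto).
  assert (Hab2 : 0 < a^2 - b^2) by nra.
  assert (Hab3 : 0 < dd*a^2 - dd*b^2) by nra.
  destruct Hc as (F1 & F2 & F3 & F4 & F5 & F6 & F7 & F8 & F9 & F10 & F11 & F12 & F13 & F14 & F15 & F16).
  Ltac fin F := rewrite F; apply sqrt_eq; [pos | field; repeat split; lra].
  assert (G7 : pdist T1 I = 2 * dd * b * a ^ 2 / c) by fin F7.
  assert (G8 : pdist T2 I = 2 * dd * a * b ^ 2 / c) by fin F8.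
  assert (G9 : pdist C1 M1 = dd * a ^ 3 / c) by fin F9.
  assert (G10 : pdist C2 M2 = dd * b ^ 3 / c) by fin F10.
  assert (G11 : pdist M1 M = dd * a * b ^ 2 / c) by fin F11.
  assert (G12 : pdist M2 M = dd * b * a ^ 2 / c) by fin F12.
  assert (G13 : pdist C2 K = dd * b ^ 2 * c ^ 2 / (a ^ 2 - b ^ 2)) by fin F13.
  assert (G14 : pdist T2 K = 2 * dd * b ^ 3 * a / (a ^ 2 - b ^ 2)) by fin F14.
  assert (G15 : pdist C1 K = dd * a ^ 2 * c ^ 2 / (a ^ 2 - b ^ 2)) by fin F15.
  assert (G16 : pdist T1 K = 2 * dd * a ^ 3 * b / (a ^ 2 - b ^ 2)) by fin F16.
  assert (Zc : IZR (Z.of_nat r3) = c) by (unfold c; rewrite INR_IZR_INZ; auto).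
  assert (Zab : IZR (Z.of_nat (r1^2) - Z.of_nat (r2^2)) = a^2 - b^2)
    by (rewrite minus_IZR, <- !INR_IZR_INZ, !pow_INR; auto).
  assert (Nc : Z.of_nat r3 <> 0%Z) by lia.
  assert (Nab : (Z.of_nat (r1^2) - Z.of_nat (r2^2) <> 0)%Z) by lia.
  Ltac rat G n Zq Nq := rewrite G; exists (Z.of_nat n); eexists; split; [exact Nq|];
     rewrite Zq, <- INR_IZR_INZ, !mult_INR, !pow_INR, ?INR2; reflexivity.
  repeat split; auto.
  - fin F1.
  - fin F2.
  - fin F3.
  - fin F4.
  - fin F5.
  - fin F6.
  - rat G7 (2*d*r2*r1^2)%nat Zc Nc.
  - rat G8 (2*d*r1*r2^2)%nat Zc Nc.
  - rat G9 (d*r1^3)%nat Zc Nc.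
  - rat G10 (d*r2^3)%nat Zc Nc.
  - rat G11 (d*r1*r2^2)%nat Zc Nc.
  - rat G12 (d*r2*r1^2)%nat Zc Nc.
  - rat G13 (d*r2^2*r3^2)%nat Zab Nab.
  - rat G14 (2*d*r2^3*r1)%nat Zab Nab.
  - rat G15 (d*r1^2*r3^2)%nat Zab Nab.
  - rat G16 (2*d*r1^3*r2)%nat Zab Nab.
Qed.

Theorem mainTheorem3 (R1 R2 : nat) (C1 C2 I T1 T2 M M1 M2 K : point) :
  (0 < R2)%nat -> (R2 < R1)%nat ->
  config (INR R1) (INR R2) C1 C2 I T1 T2 M M1 M2 K ->
  ((is_integer (pdist T1 T2) /\ is_integer (pdist C1 M) /\ is_integer (pdist C2 M))
   <->
   (exists d r1 r2 r3 : nat,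
      (0 < d)%nat /\ (0 < r1)%nat /\ (0 < r2)%nat /\ (0 < r3)%nat /\
      Nat.gcd r1 r2 = 1%nat /\ (r1 ^ 2 + r2 ^ 2 = r3 ^ 2)%nat /\
      R1 = (d * r1 ^ 2)%nat /\ R2 = (d * r2 ^ 2)%nat))
  /\
  (forall d r1 r2 r3 : nat,
      (0 < d)%nat -> (0 < r1)%nat -> (0 < r2)%nat -> (0 < r3)%nat ->
      Nat.gcd r1 r2 = 1%nat -> (r1 ^ 2 + r2 ^ 2 = r3 ^ 2)%nat ->
      R1 = (d * r1 ^ 2)%nat -> R2 = (d * r2 ^ 2)%nat ->
      let dd := INR d in let a := INR r1 in let b := INR r2 in let c := INR r3 in
      (r2 < r1)%nat /\
      pdist T1 T2 = 2 * dd * a * b /\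
      pdist I M = dd * a * b /\ pdist T1 M = dd * a * b /\ pdist T2 M = dd * a * b /\
      pdist C1 M = dd * a * c /\ pdist C2 M = dd * b * c /\
      pdist T1 I = 2 * dd * b * a ^ 2 / c /\
      pdist T2 I = 2 * dd * a * b ^ 2 / c /\
      pdist C1 M1 = dd * a ^ 3 / c /\
      pdist C2 M2 = dd * b ^ 3 / c /\
      pdist M1 M = dd * a * b ^ 2 / c /\
      pdist M2 M = dd * b * a ^ 2 / c /\
      pdist C2 K = dd * b ^ 2 * c ^ 2 / (a ^ 2 - b ^ 2) /\
      pdist T2 K = 2 * dd * b ^ 3 * a / (a ^ 2 - b ^ 2) /\
      pdist C1 K = dd * a ^ 2 * c ^ 2 / (a ^ 2 - b ^ 2) /\
      pdist T1 K = 2 * dd * a ^ 3 * b / (a ^ 2 - b ^ 2) /\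
      is_rational (pdist T1 I) /\ is_rational (pdist T2 I) /\
      is_rational (pdist C1 M1) /\ is_rational (pdist C2 M2) /\
      is_rational (pdist M1 M) /\ is_rational (pdist M2 M) /\
      is_rational (pdist C2 K) /\ is_rational (pdist T2 K) /\
      is_rational (pdist C1 K) /\ is_rational (pdist T1 K)).
Proof.
  intros H2 H12 Hc.
  pose proof (part2 R1 R2 C1 C2 I T1 T2 M M1 M2 K H2 H12 Hc) as P2.
  split; [|exact P2].
  split.
  - intros [[n Hn] [[p Hp] _]].
    pose proof (geom _ _ _ _ _ _ _ _ _ _ _ Hc) as G.
    destruct G as (F1 & _ & _ & _ & F5 & _).
    assert (HR1 : 0 < INR R1) by (apply lt_0_INR; lia).
    assert (HR2 : 0 < INR R2) by (apply lt_0_INR; lia).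
    rewrite F1 in Hn. rewrite F5 in Hp.
    apply int_sq in Hn; [|nra]. apply int_sq in Hp; [|nra].
    destruct Hn as [N HN]. destruct Hp as [P HP].
    apply (nt_main R1 R2 N P); auto.
    + apply INR_eq. rewrite !mult_INR, INR4. lra.
    + apply INR_eq. rewrite !mult_INR, plus_INR. lra.
  - intros (d & r1 & r2 & r3 & Hd & Hr1 & Hr2 & Hr3 & Hg & Hpy & E1 & E2).
    destruct (P2 d r1 r2 r3 Hd Hr1 Hr2 Hr3 Hg Hpy E1 E2) as (_ & F1 & _ & _ & _ & F5 & F6 & _).
    split; [|split].
    + exists (Z.of_nat (2*d*r1*r2)). rewrite F1, <- INR_IZR_INZ, !mult_INR, INR2. reflexivity.
    + exists (Z.of_nat (d*r1*r3)). rewrite F5, <- INR_IZR_INZ, !mult_INR. reflexivity.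
    + exists (Z.of_nat (d*r2*r3)). rewrite F6, <- INR_IZR_INZ, !mult_INR. reflexivity.
Qed.
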